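(* Let $f\in\mathcal F^{\,r}_{op}$ and let $k$ satisfy $1\le k<\frac{1}{2f(0)}$. Then the inequality $I^{SLD}_\rho(A)\le k\,I^f_\rho(A)$ does not hold for all $n$, all faithful $\rho\in\mathcal D^1_n$ and all self-adjoint $A\in M_n(\mathbb C)$; i.e. there exist $n$, a faithful $\rho\in\mathcal D^1_n$ and a self-adjoint $A$ with $I^{SLD}_\rho(A)>k\,I^f_\rho(A)$. Thus the constant $\frac{1}{2f(0)}$ in $I^{SLD}_\rho(A)\le\frac{1}{2f(0)}I^f_\rho(A)$ is optimal.
   Context: $\mathcal F_{op}$ is the class of functions $f:(0,\infty)\to(0,\infty)$ that are operator monotone, satisfy $f(1)=1$ and $tf(t^{-1})=f(t)$ for all $t>0$. $f(0):=\lim_{x\to0^+}f(x)$, and $\mathcal F^{\,r}_{op}=\{f\in\mathcal F_{op}: f(0)\neq0\}$. $\mathcal D_n^1$ is the set of strictly positive $n\times n$ density matrices. For $x,y>0$, $m_f(x,y)=xf(y/x)$; $L_\rho(X)=\rho X$, $R_\rho(X)=X\rho$, and $m_f(L_\rho,R_\rho)$ multiplies the entry $X_{ij}$ of $X$ (in an orthonormal eigenbasis of $\rho$ with eigenvalues $\lambda_i$) by $m_f(\lambda_i,\lambda_j)$. $\|X\|^2_{\rho,f}=\mathrm{Tr}\big(X^* m_f(L_\rho,R_\rho)^{-1}(X)\big)$. The $f$-information is $I^f_\rho(A)=\frac{f(0)}{2}\|i[\rho,A]\|^2_{\rho,f}$, and $I^{SLD}_\rho:=I^{f_{SLD}}_\rho$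 with $f_{SLD}(x)=\frac{1+x}{2}$. *)

(* Defs.v *)
From HB Require Import structures.
From mathcomp Require Import all_boot all_order all_algebra.
From mathcomp Require Import complex.
From mathcomp Require Import all_classical all_reals all_analysis.
Set Implicit Arguments. Unset Strict Implicit. Unset Printing Implicit Defensive.
Import Order.TTheory GRing.Theory Num.Theory.
Import numFieldNormedType.Exports.
Local Open Scope classical_set_scope.
Local Open Scope ring_scope.

Section Defs.
Variable R : realType.
Local Notation C := R[i].

Definition rC (x : R) : C := Complex x 0.

Definition adj n m (M : 'M[C]_(n, m)) : 'M[C]_(m, n) :=
  \matrix_(i, j) Num.conj (M j i).

Definition herm_mx n (M : 'M[C]_n) : Prop := adj M = M.
Definition unitary_mx n (U : 'M[C]_n) : Prop := U *m adj U = 1%:M.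

(* positive semidefinite: <x, M x> is a nonnegative real for every x *)
Definition psd n (M : 'M[C]_n) : Prop :=
  forall x : 'cV[C]_n, 0 <= (adj x *m M *m x) 0 0.

Definition loewner n (A B : 'M[C]_n) : Prop := psd (B - A).

Definition spec_mx n (U : 'M[C]_n) (a : 'I_n -> R) : 'M[C]_n :=
  U *m diag_mx (\row_i rC (a i)) *m adj U.

(* f : (0,oo) -> (0,oo) is operator monotone: for all n and all positive
   definite A = U diag(a) U^*, B = V diag(b) V^* (U, V unitary_mx, a, b > 0),
   A <= B implies f(A) = U diag(f a) U^* <= V diag(f b) V^* = f(B). *)
Definition operator_monotone (f : R -> R) : Prop :=
  forall n (U V : 'M[C]_n) (a b : 'I_n -> R),
    unitary_mx U -> unitary_mx V -> (forall i, 0 < a i) -> (forall i, 0 < b i) ->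
    loewner (spec_mx U a) (spec_mx V b) ->
    loewner (spec_mx U (f \o a)) (spec_mx V (f \o b)).

Definition F_op (f : R -> R) : Prop :=
  (forall x, 0 < x -> 0 < f x) /\ operator_monotone f /\ f 1 = 1 /\
  (forall t, 0 < t -> t * f t^-1 = f t).

Definition f0 (f : R -> R) : R := lim (f @ 0^'+).

Definition F_op_r (f : R -> R) : Prop := F_op f /\ f0 f != 0.

Definition f_SLD (x : R) : R := (1 + x) / 2.

Definition m_f (f : R -> R) (x y : R) : R := x * f (y / x).

(* A faithful density matrix rho is given together with an orthonormal
   eigenbasis: rho = U diag(lam) U^*, U unitary_mx, lam_i > 0, sum lam_i = 1. *)
Definition faithful_density n (U : 'M[C]_n) (lam : 'I_n -> R) : Prop :=
  unitary_mx U /\ (forall i, 0 < lam i) /\ \sum_i lam i = 1.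

Definition rho_of n (U : 'M[C]_n) (lam : 'I_n -> R) : 'M[C]_n := spec_mx U lam.

(* m_f(L_rho, R_rho)^{-1}(X): in the eigenbasis of rho (columns of U),
   entry X_ij is divided by m_f(lam_i, lam_j). *)
Definition mf_inv (f : R -> R) n (U : 'M[C]_n) (lam : 'I_n -> R)
  (X : 'M[C]_n) : 'M[C]_n :=
  let Y := adj U *m X *m U in
  U *m (\matrix_(i, j) (Y i j / rC (m_f f (lam i) (lam j)))) *m adj U.

Definition fnorm2 (f : R -> R) n (U : 'M[C]_n) (lam : 'I_n -> R)
  (X : 'M[C]_n) : C :=
  \tr (adj X *m mf_inv f U lam X).

Definition f_info (f : R -> R) n (U : 'M[C]_n) (lam : 'I_n -> R)
  (A : 'M[C]_n) : C :=
  let rho := rho_of U lam in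
  rC (f0 f / 2) * fnorm2 f U lam ('i *: (rho *m A - A *m rho)).

Definition SLD_info n (U : 'M[C]_n) (lam : 'I_n -> R) (A : 'M[C]_n) : C :=
  f_info f_SLD U lam A.

End Defs.

(* Main.v *)
Require Import Defs.
From HB Require Import structures.
From mathcomp Require Import all_boot all_order all_algebra.
From mathcomp Require Import complex.
From mathcomp Require Import all_classical all_reals all_analysis.
From mathcomp Require Import ring lra.
Import Order.TTheory GRing.Theory Num.Theory.
Import numFieldNormedType.Exports.
Local Open Scope ring_scope.
Section S.

Variable R : realType.
Local Open Scope complex_scope.
Lemma rCE (x : R) : rC x = x%:C.
Proof. reflexivity. Qed.
Lemma rCV (x : R) : (rC x)^-1 = rC x^-1.
Proof. by rewrite !rCE fmorphV. Qed.
Lemma conjE (x : R[i]) : Num.conj x = (x^*)%C. Proof. reflexivity. Qed.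

Lemma adj1 n : adj (1%:M : 'M[R[i]]_n) = 1%:M.
Proof.
apply/matrixP => i j; rewrite !mxE conjE conjc_nat eq_sym //.
Qed.

Definition lam2 (a b : R) : 'I_2 -> R := fun i => if (i : nat) == 0%N then a else b.
Definition A2 : 'M[R[i]]_2 := \matrix_(i, j) if (i : nat) == j then 0 else 1.

Lemma finfo2 g a b : f_info g 1%:M (lam2 a b) A2 =
  rC (f0 g / 2) * rC ((a - b)^+2 * ((m_f g a b)^-1 + (m_f g b a)^-1)).
Proof.
rewrite /f_info /fnorm2 /mf_inv /rho_of /spec_mx adj1 !mul1mx !mulmx1.
rewrite /mxtrace !(big_ord_recr, big_ord0, mxE) /= /lam2 /A2 ?mxE /=.
rewrite !(mulr1n, mulr0n, mulr0, mul0r, mulr1, mul1r, addr0, add0r, subr0, sub0r) !rCV !rCE.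
simpc. by congr (_ +i* _); ring.
Qed.
Lemma quad1 (c d : 'I_1 -> R) (x : 'cV[R[i]]_1) :
  (adj x *m (spec_mx 1%:M c - spec_mx 1%:M d) *m x) 0 0 =
  rC (c 0 - d 0) * ((x 0 0)^* * x 0 0).
Proof.
rewrite /spec_mx adj1 !mul1mx !mulmx1.
rewrite !(big_ord_recr, big_ord0, mxE) /= ?mxE /=.
rewrite !(mulr1n, add0r) !rCE.
have -> : (ord_max : 'I_1) = 0 by apply/val_inj.
rewrite conjE rmorphB /=. ring.
Qed.

Lemma mono1 (f : R -> R) (s : R) : operator_monotone f -> 1 < s -> f 1 <= f s.
Proof.
move=> Hm Hs.
have := Hm 1%N (1%:M : 'M[R[i]]_1) 1%:M (fun _ => 1) (fun _ => s).
have U1 : unitary_mx (1%:M : 'M[R[i]]_1) by rewrite /unitary_mx adj1 mul1mx.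
move=> /(_ U1 U1 (fun _ => ltr01) (fun _ => lt_trans ltr01 Hs)).
have L : loewner (spec_mx (1%:M : 'M[R[i]]_1) (fun=> 1)) (spec_mx (1%:M : 'M[R[i]]_1) (fun=> s)).
  rewrite /loewner /psd => x. rewrite quad1; case: (x 0 0) => p q; rewrite rCE; simpc.
  apply/andP; split; first by rewrite [q * p]mulrC subrr mulr0.
  apply: mulr_ge0; first lra. nra.
move=> /(_ L); rewrite /loewner /psd => /(_ (const_mx 1)); rewrite quad1 mxE rCE; simpc.
rewrite /= subr_ge0 //.
Qed.
Local Close Scope complex_scope.
Local Open Scope classical_set_scope.
Local Open Scope ring_scope.


Lemma f0SLD : f0 (@f_SLD R) = 2^-1.
Proof.
have H : (fun x : R => (1 + x) / 2) @ 0^'+ --> ((1 + 0) / 2 : R).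
  apply: cvg_at_right_filter. apply: cvgMl. apply: cvgD; first exact: cvg_cst.
  exact: cvg_id.
rewrite addr0 mul1r in H. rewrite /f0 /f_SLD. exact: cvg_lim H.
Qed.

Lemma herm_A2 : herm_mx A2.
Proof.
apply/matrixP => i j; rewrite !mxE conjE eq_sym.
by case: ifP => _; rewrite ?conjc0 ?conjc1.
Qed.

Lemma fd2 a b : 0 < a -> 0 < b -> a + b = 1 ->
  faithful_density (1%:M : 'M[R[i]]_2) (lam2 a b).
Proof.
move=> Ha Hb Hab; split; first by rewrite /unitary_mx adj1 mul1mx.
split; first by move=> i; rewrite /lam2; case: ifP.
by rewrite !(big_ord_recr, big_ord0) /= /lam2 /= add0r.
Qed.

Lemma mSLD (a b : R) : 0 < a -> m_f (@f_SLD R) a b = (a + b) / 2 :> R.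
Proof. move=> Ha; rewrite /m_f /f_SLD; field; lra. Qed.
End S.

Theorem mainTheorem7 (R : realType) (f : R -> R) (k : R) :
  F_op_r f -> 1 <= k -> k < (2 * f0 f)^-1 ->
  exists (n : nat) (U : 'M[complex R]_n) (lam : 'I_n -> R) (A : 'M[complex R]_n),
    faithful_density U lam /\ herm_mx A /\
    rC k * f_info f U lam A < SLD_info U lam A.
Proof.
move=> [[Hpos [Hmono [H1 Hsym]]] Hf0] Hk1 Hk2.
have c_pos : 0 < f0 f.
  case: (ltgtP (f0 f) 0) => // [Hneg|Heq]; last by rewrite Heq eqxx in Hf0.
  have : (2 * f0 f)^-1 < 0 by rewrite invr_lt0; lra.
  lra.
have Hkc : k * f0 f < 2^-1.
  have h2 : 0 < 2 * f0 f by lra.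
  move: Hk2; rewrite -(ltr_pM2r h2) mulVf ?gt_eqF // => H.
  nra.
have kc_pos : 0 < k * f0 f by apply: mulr_gt0 => //; lra.
set b := (k * f0 f + 2^-1) / 2.
set a := 1 - b.
have hb : 0 < b by rewrite /b; lra.
have hb2 : b < 2^-1 by rewrite /b; lra.
have ha : 0 < a by rewrite /a; lra.
have hab : b < a by rewrite /a; lra.
have t := Hsym (b / a) (divr_gt0 hb ha).
rewrite invf_div in t.
have hfab : 1 <= f (a / b).
  rewrite -H1; apply: mono1 => //; rewrite ltr_pdivlMr // mul1r //.
have HM : b <= m_f f a b.
  rewrite /m_f -t.
  have -> : a * (b / a * f (a / b)) = b * f (a / b) by field; lra.
  nra.
have HM2 : m_f f b a = m_f f a b.
  rewrite /m_f -t; field; lra.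
have ab1 : a + b = 1 by rewrite /a; lra.
have hbk : k * f0 f < b by rewrite /b; lra.
clearbody a b.
exists 2%N, 1%:M, (@lam2 R a b), (@A2 R).
split; first by apply: fd2.
split; first exact: herm_A2.
rewrite /SLD_info !finfo2 f0SLD !mSLD // HM2 !rCE -!rmorphM /= ltcR.
have Mpos : 0 < m_f f a b by lra.
have dpos : 0 < (a - b) ^+ 2 by rewrite exprn_gt0 //; lra.
have -> : k * (f0 f / 2 * ((a - b) ^+ 2 * ((m_f f a b)^-1 + (m_f f a b)^-1)))
   = k * f0 f * (a - b) ^+ 2 / m_f f a b by field; lra.
have E : forall x y d : R, x + y = 1 ->
  2^-1 / 2 * (d * (((x + y) / 2)^-1 + ((y + x) / 2)^-1)) = d.
  move=> x y d xy; have -> : y = 1 - x by lra.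
  field; apply/eqP => H; lra.
rewrite E //.
rewrite ltr_pdivrMr //.
have h : 0 < (a - b) ^+ 2 * (m_f f a b - k * f0 f) by apply: mulr_gt0 => //; lra.
nra.
Qed.
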